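(* Let $(X_k)_{k\ge1}$ be a random walk on a finite vertex set $V$ (possibly non-Markovian and non-stationary). For an initial node $u\in V$ (i.e., $X_1=u$), assume $K(u,\{v\})<\infty$ for all $v\in V$. Then $S\mapsto K(u,S)$ is supermodular on the nonempty subsets of $V$: for all nonempty $S\subseteq T\subseteq V$ and $v\in V\setminus T$, $K(u,S\cup\{v\})-K(u,S)\le K(u,T\cup\{v\})-K(u,T)$. Consequently, for any probability distribution $\pi$ on $V$ (with these finiteness assumptions holding for each $u$ in the support of $\pi$), $K(\pi,S)=\sum_{u\in V}\pi(u)K(u,S)$ is also supermodular on the nonempty subsets of $V$.
   Context: A random walk on $V$ is a discrete-time random process $X_1,X_2,\dots$ with values in $V$ whose law is given by arbitrary conditional distributions $\Pr(X_k=\cdot\mid X_1,\dots,X_{k-1})$. For nonempty $S\subseteq V$, $\kappa(S)=\min\{k: X_k=X_1 \text{ and } X_j\in S \text{ for some } j<k\}$, and the commute time from $u$ is $K(u,S)=\mathbf{E}[\kappa(S)\mid X_1=u]$. Supermodular means the negative is submodular, where $f$ is submodular if $f(S\cup\{v\})-f(S)\ge f(T\cup\{v\})-f(T)$ for $S\subseteq T$, $v\notin T$. *)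

(* Defs.v *)
From mathcomp Require Import all_boot.
From Stdlib Require Import Reals.
Set Implicit Arguments. Unset Strict Implicit. Unset Printing Implicit Defensive.

(* A general (possibly non-Markovian, non-stationary) random walk on a finite
   set V is given by its conditional laws:
     p h v = Pr(X_{k} = v | (X_1,...,X_{k-1}) = h)   for every nonempty history h. *)
Definition is_kernel (V : finType) (p : seq V -> V -> R) : Prop :=
  forall h : seq V, h <> [::] ->
    (forall v, (0 <= p h v)%R) /\ \big[Rplus/R0]_(v : V) p h v = R1.

(* Probability of the prefix (X_1,...,X_n) = t, conditionally on X_1 = t_1. *)
Definition pathprob (V : finType) (p : seq V -> V -> R) (n : nat)
    (t : n.-tuple V) : R :=
  \big[Rmult/R1]_(i < n | (0 < i)%N) p (take i t) (tnth t i).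

(* The trajectory t = (x_1,...,x_n) has already reached time kappa(S), i.e.
   there are positions j < m with x_m = x_1 and x_j in S. *)
Definition stopped (V : finType) (S : {set V}) (n : nat) (t : n.+1.-tuple V) : bool :=
  [exists m : 'I_n.+1, [exists j : 'I_n.+1,
     [&& (j < m)%N, tnth t j \in S & tnth t m == thead t]]].

(* Pr(kappa(S) > k.+1 | X_1 = u). *)
Definition surv (V : finType) (p : seq V -> V -> R) (u : V) (S : {set V})
    (k : nat) : R :=
  \big[Rplus/R0]_(t : k.+1.-tuple V | (thead t == u) && ~~ stopped S t)
     pathprob p t.

Definition tail_prob (V : finType) (p : seq V -> V -> R) (u : V) (S : {set V})
    (k : nat) : R :=
  match k with 0 => R1 | k'.+1 => surv p u S k' end.

(* K(u,S) is finite and equals l:  E[kappa(S) | X_1 = u] = sum_{k>=0} Pr(kappa(S) > k) = l. *)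
Definition commute_time (V : finType) (p : seq V -> V -> R) (u : V)
    (S : {set V}) (l : R) : Prop :=
  infinite_sum (tail_prob p u S) l.

Definition supermodular_ne (V : finType) (F : {set V} -> R) : Prop :=
  forall (S T : {set V}) (v : V),
    S != set0 -> S \subset T -> v \notin T ->
    (F (v |: S) - F S <= F (v |: T) - F T)%R.

Definition is_distribution (V : finType) (pi : V -> R) : Prop :=
  (forall u, (0 <= pi u)%R) /\ \big[Rplus/R0]_(u : V) pi u = R1.

(* Main.v *)
Require Import Defs.
From HB Require Import structures.
From mathcomp Require Import all_boot.
From Stdlib Require Import Reals Lra ClassicalEpsilon.

Set Implicit Arguments. Unset Strict Implicit. Unset Printing Implicit Defensive.

Lemma RplusA : associative Rplus. Proof. by move=> *; rewrite Rplus_assoc. Qed.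
HB.instance Definition _ := Monoid.isComLaw.Build R R0 Rplus RplusA Rplus_comm Rplus_0_l.

Lemma sum_comb_le (I : finType) (P : pred I) (f g h k : I -> R) :
  (forall i, P i -> (f i - g i <= h i - k i)%R) ->
  (\big[Rplus/R0]_(i | P i) f i - \big[Rplus/R0]_(i | P i) g i <=
   \big[Rplus/R0]_(i | P i) h i - \big[Rplus/R0]_(i | P i) k i)%R.
Proof.
move=> H.
suff: (\big[Rplus/R0]_(i | P i) (f i + k i) <= \big[Rplus/R0]_(i | P i) (h i + g i))%R.
  rewrite !big_split /=; lra.
apply: (big_ind2 (fun x y => x <= y)%R); first lra.
  by move=> *; lra.
by move=> i Pi; have := H i Pi; lra.
Qed.

Lemma sum_le (I : finType) (P : pred I) (f g : I -> R) :
  (forall i, P i -> (f i <= g i)%R) ->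
  (\big[Rplus/R0]_(i | P i) f i <= \big[Rplus/R0]_(i | P i) g i)%R.
Proof.
move=> H; apply: (big_ind2 (fun x y => x <= y)%R); first lra.
  by move=> *; lra.
exact: H.
Qed.

Section Walk.
Variables (V : finType) (p : seq V -> V -> R) (Hp : is_kernel p).

Lemma pathprob_ge0 n (t : n.-tuple V) : (0 <= pathprob p t)%R.
Proof.
rewrite /pathprob; apply: (big_ind (fun x => 0 <= x)%R); first lra.
  by move=> x y; apply: Rmult_le_pos.
move=> i i0.
have ne : take i t <> [::].
  move=> E; have := congr1 size E; rewrite size_take size_tuple ltn_ord /=.
  by move=> E2; rewrite E2 in i0.
by have [H _] := Hp ne; apply: H.
Qed.

Lemma stoppedU (A B : {set V}) n (t : n.+1.-tuple V) :
  stopped (A :|: B) t = stopped A t || stopped B t.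
Proof.
rewrite /stopped; apply/idP/idP.
  case/existsP=> m /existsP [j /and3P [jm]]; rewrite in_setU => /orP [] jA e.
    by apply/orP; left; apply/existsP; exists m; apply/existsP; exists j; rewrite jm jA e.
  by apply/orP; right; apply/existsP; exists m; apply/existsP; exists j; rewrite jm jA e.
case/orP=> /existsP [m /existsP [j /and3P [jm jA e]]];
  apply/existsP; exists m; apply/existsP; exists j; by rewrite jm in_setU jA ?orbT e.
Qed.

Lemma stopped_mono (A B : {set V}) n (t : n.+1.-tuple V) :
  A \subset B -> stopped A t -> stopped B t.
Proof.
move=> AB; have -> : B = A :|: B by apply/esym/setUidPr.
by rewrite stoppedU => ->.
Qed.

Lemma surv_eq u S k : surv p u S k =
  \big[Rplus/R0]_(t : k.+1.-tuple V | thead t == u)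
     (if stopped S t then R0 else pathprob p t).
Proof.
rewrite /surv big_mkcondr /=; apply: eq_bigr => t _.
by case: (stopped S t).
Qed.

Lemma surv_super u (S T : {set V}) v k : S \subset T ->
  (surv p u (v |: S) k - surv p u S k <= surv p u (v |: T) k - surv p u T k)%R.
Proof.
move=> ST; rewrite !surv_eq; apply: sum_comb_le => t _.
rewrite !stoppedU.
have := stopped_mono (t:=t) ST; have := pathprob_ge0 t.
case: (stopped S t); case: (stopped T t); case: (stopped [set v] t) => /=; try lra.
by move=> _ H; have := H isT.
Qed.

Lemma surv_ge0 u S k : (0 <= surv p u S k)%R.
Proof.
rewrite surv_eq; apply: (big_ind (fun x => 0 <= x)%R); first lra.
  by move=> *; lra.
by move=> t _; case: stopped; [lra | apply: pathprob_ge0].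
Qed.

Lemma surv_mono u (S T : {set V}) k : S \subset T ->
  (surv p u T k <= surv p u S k)%R.
Proof.
move=> ST; rewrite !surv_eq; apply: sum_le => t _.
have := stopped_mono (t:=t) ST; have := pathprob_ge0 t.
case: (stopped S t); case: (stopped T t) => /=; try lra.
by move=> _ H; have := H isT.
Qed.

Lemma tail_super u (S T : {set V}) v k : S \subset T ->
  (tail_prob p u (v |: S) k - tail_prob p u S k <=
   tail_prob p u (v |: T) k - tail_prob p u T k)%R.
Proof. by case: k => [|k] ST /=; [lra | apply: surv_super]. Qed.

Lemma partial_super u (S T : {set V}) v n : S \subset T ->
  (sum_f_R0 (tail_prob p u (v |: S)) n - sum_f_R0 (tail_prob p u S) n <=
   sum_f_R0 (tail_prob p u (v |: T)) n - sum_f_R0 (tail_prob p u T) n)%R.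
Proof.
move=> ST; elim: n => [|n IH]; first exact: (tail_super u v 0 ST).
have := tail_super u v n.+1 ST; rewrite /sum_f_R0 -/sum_f_R0; lra.
Qed.

Definition Kc u S := epsilon (inhabits R0) (commute_time p u S).

Lemma Kc_spec u S : (exists l, commute_time p u S l) -> commute_time p u S (Kc u S).
Proof. exact: epsilon_spec. Qed.

Lemma exists_ct u (S : {set V}) :
  (forall v, exists l, commute_time p u [set v] l) ->
  S != set0 -> exists l, commute_time p u S l.
Proof.
move=> H /set0Pn [v vS].
have [l Hl] := H v.
have sg : {l : R | Un_cv (sum_f_R0 (tail_prob p u [set v])) l} by exists l; exact: Hl.
have B : forall n, (0 <= tail_prob p u S n <= tail_prob p u [set v] n)%R.
  case=> [|n] /=; first lra.
  split; first exact: surv_ge0.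
  by apply: surv_mono; rewrite sub1set.
have [l' Hl'] := Rseries_CV_comp (tail_prob p u S) (tail_prob p u [set v]) B sg.
by exists l'; exact: Hl'.
Qed.

Lemma Kc_super u (S T : {set V}) v :
  (forall v, exists l, commute_time p u [set v] l) ->
  S != set0 -> S \subset T ->
  (Kc u (v |: S) - Kc u S <= Kc u (v |: T) - Kc u T)%R.
Proof.
move=> H S0 ST.
have ne : forall A : {set V}, S \subset A -> A != set0.
  move=> A SA; apply: contraNneq S0 => A0; rewrite -subset0 -A0 //.
have C := fun (A : {set V}) (SA : S \subset A) => Kc_spec (exists_ct H (ne A SA)).
have c1 := C _ (subsetUr [set v] S).
have c2 := C _ (subxx S).
have c3 := C _ (subset_trans ST (subsetUr [set v] T)).
have c4 := C _ ST.
have L1 := CV_minus _ _ _ _ c1 c2.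
have L2 := CV_minus _ _ _ _ c3 c4.
exact: (Rle_cv_lim (fun n => partial_super u v n ST) L1 L2).
Qed.

End Walk.

Theorem lemma10 (V : finType) (p : seq V -> V -> R) (Hp : is_kernel p) :
  (forall u : V,
     (forall v : V, exists l : R, commute_time p u [set v] l) ->
     exists K : {set V} -> R,
       (forall S : {set V}, S != set0 -> commute_time p u S (K S)) /\
       supermodular_ne K)
  /\
  (forall pi : V -> R, is_distribution pi ->
     (forall u : V, (0 < pi u)%R ->
        forall v : V, exists l : R, commute_time p u [set v] l) ->
     exists K : V -> {set V} -> R,
       (forall (u : V) (S : {set V}), (0 < pi u)%R -> S != set0 ->
          commute_time p u S (K u S)) /\
       supermodular_ne (fun S => \big[Rplus/R0]_(u : V) (pi u * K u S)%R)).
Proof.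
split.
  move=> u H; exists (Kc p u); split.
    by move=> S S0; apply: Kc_spec; apply: exists_ct.
  by move=> S T v S0 ST _; apply: Kc_super.
move=> pi [pi0 _] H; exists (Kc p); split.
  by move=> u S pu S0; apply: Kc_spec; apply: exists_ct => //; apply: H.
move=> S T v S0 ST _ /=.
apply: sum_comb_le => u _.
have [pu|pu] := Rle_lt_or_eq_dec _ _ (pi0 u).
  have := Kc_super Hp v (H u pu) S0 ST.
  move=> Hle; have := Rmult_le_compat_l _ _ _ (pi0 u) Hle; lra.
rewrite -pu; lra.
Qed.
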